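(* Let $n,m\ge 3$ and let $G=P_n\square P_m$ be the grid graph. Let $(p,q)$ be an interior vertex, taken as origin. Let $Q$ and $Q'$ be two opposite quadrants with respect to $(p,q)$. Let $A$ be a finite set of vertices all lying in $Q$, let $B$ be a finite set of vertices all lying in $Q'$, and let $C$ be a finite set of vertices all lying on the boundary of one of these two quadrants (i.e. all on the boundary of $Q$, or all on the boundary of $Q'$). Then there exist two neighbours of $(p,q)$, of the form $(p^*,q)$ and $(p,q^* )$, that are not resolved by any vertex of $\{(p,q)\}\cup A\cup B\cup C$.
   Context: The grid graph $P_n\square P_m$ has vertex set $\{(i,j):0\le i\le n-1,\ 0\le j\le m-1\}$, with $(i,j)$ adjacent to $(k,l)$ iff $|i-k|+|j-l|=1$; distance $d((i,j),(k,l))=|i-k|+|j-l|$. A vertex $w$ resolves $x,y$ if $d(w,x)\ne d(w,y)$. Interior vertices are those of degree 4. With respect to an origin $(p,q)$, the four quadrants are $\{(x,y):x>p,y>q\}$, $\{(x,y):x<p,y>q\}$, $\{(x,y):x<p,y<q\}$, $\{(x,y):x>p,y<q\}$ (the axes and origin belong to no quadrant). The boundary of a quadrant consists of the points on the two half-axes bounding it, excluding the origin; e.g. the boundary of $\{x>p,y>q\}$ is $\{(x,q):x>p\}\cup\{(p,y):y>q\}$. Two quadrants are opposite if their boundaries share no point (i.e. $\{x>p,y>q\}$ with $\{x<p,y<q\}$, and $\{x<p,y>q\}$ with $\{x>p,y<q\}$). *)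

(* Defs.v *)
From mathcomp Require Import all_boot all_order.
Set Implicit Arguments. Unset Strict Implicit. Unset Printing Implicit Defensive.

Notation vertex n m := (prod (ordinal n) (ordinal m)).

Definition distn (a b : nat) : nat := (a - b) + (b - a).

(* Manhattan (graph) distance d((i,j),(k,l)) = |i-k| + |j-l| *)
Definition gdist n m (x y : vertex n m) : nat :=
  distn x.1 y.1 + distn x.2 y.2.

Definition gadj n m (x y : vertex n m) : bool := gdist x y == 1.

Definition degree n m (x : vertex n m) : nat := #|[set y : vertex n m | gadj x y]|.

Definition interior n m (x : vertex n m) : bool := degree x == 4.

Definition resolves n m (w x y : vertex n m) : bool := gdist w x != gdist w y.

Definition side (b : bool) (c a : nat) : bool := if b then c < a else a < c.

Definition quadrant n m (sx sy : bool) (o : vertex n m) : {set vertex n m} :=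
  [set v : vertex n m | side sx o.1 v.1 && side sy o.2 v.2].

(* Boundary of that quadrant: the two bounding half-axes minus the origin. *)
Definition qboundary n m (sx sy : bool) (o : vertex n m) : {set vertex n m} :=
  [set v : vertex n m | (side sx o.1 v.1 && (v.2 == o.2 :> nat))
        || ((v.1 == o.1 :> nat) && side sy o.2 v.2)].

Definition opposite n m (o : vertex n m) (sx sy tx ty : bool) : Prop :=
  [disjoint qboundary sx sy o & qboundary tx ty o].

(* Main.v *)
Require Import Defs.
From mathcomp Require Import all_boot all_order.
From mathcomp Require Import zify.
Set Implicit Arguments. Unset Strict Implicit. Unset Printing Implicit Defensive.

Definition cnat n m (o y : vertex n m) : nat :=
  if y.1 < o.1 then 0 else if o.1 < y.1 then 1 else if y.2 < o.2 then 2 else 3.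

Lemma cnat_spec n m (o y : vertex n m) : gadj o y ->
  [/\ cnat o y = 0 -> y.1 + 1 = o.1 /\ nat_of_ord y.2 = o.2,
      cnat o y = 1 -> nat_of_ord y.1 = o.1 + 1 /\ nat_of_ord y.2 = o.2,
      cnat o y = 2 -> nat_of_ord y.1 = o.1 /\ y.2 + 1 = o.2 &
      cnat o y = 3 -> nat_of_ord y.1 = o.1 /\ nat_of_ord y.2 = o.2 + 1 ].
Proof.
rewrite /gadj /gdist /distn /cnat => /eqP H.
case: ifP => h1; [|case: ifP => h2; [|case: ifP => h3]]; split => // _; lia.
Qed.

Lemma cnat_lt n m (o y : vertex n m) : cnat o y < 4.
Proof. rewrite /cnat; by repeat case: ifP. Qed.

Definition code n m (o y : vertex n m) : 'I_4 := inord (cnat o y).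

Lemma neighbor n m (o : vertex n m) : interior o ->
  forall c : 'I_4, exists y, gadj o y /\ cnat o y = c.
Proof.
move=> /eqP Hd c.
set S := [set y | gadj o y].
have inj : {in S &, injective (code o)}.
  move=> y z; rewrite !inE => hy hz /(congr1 val).
  rewrite /code /= !inordK ?cnat_lt // => e.
  have [a1 a2 a3 a4] := cnat_spec hy; have [b1 b2 b3 b4] := cnat_spec hz.
  have := cnat_lt o y; case: y hy a1 a2 a3 a4 e => [y1 y2]; case: z hz b1 b2 b3 b4 => [z1 z2] /=.
  move=> _ b1 b2 b3 b4 _ a1 a2 a3 a4 e hl.
  have [e1 e2] : nat_of_ord y1 = z1 /\ nat_of_ord y2 = z2.
    move: a1 a2 a3 a4 b1 b2 b3 b4; rewrite -e.
    case: (cnat _ _) hl => [|[|[|[|k]]]] // _ a1 a2 a3 a4 b1 b2 b3 b4.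
    - have := a1 erefl; have := b1 erefl; lia.
    - have := a2 erefl; have := b2 erefl; lia.
    - have := a3 erefl; have := b3 erefl; lia.
    - have := a4 erefl; have := b4 erefl; lia.
  by congr pair; apply: val_inj.
have : code o @: S == [set: 'I_4].
  rewrite eqEcard subsetT cardsT card_ord card_in_imset // -Hd /degree.
 exact: leqnn.
move=> /eqP E.
have : c \in code o @: S by rewrite E inE.
case/imsetP => y; rewrite inE => hy ->; exists y; split => //.
by rewrite /code /= inordK // cnat_lt.
Qed.

Lemma neighbor' n m (o : vertex n m) : interior o ->
  forall c, c < 4 -> exists y, gadj o y /\ cnat o y = c.
Proof. move=> H c hc; exact: (neighbor H (Ordinal hc)). Qed.

Lemma arith (p q x y u1 v2 : nat) (ax ay : bool) :
 (if ax then u1 + 1 = p else u1 = p + 1) ->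
 (if ay then v2 + 1 = q else v2 = q + 1) ->
 [|| (x == p) && (y == q), side ax p x && side ay q y,
     side (~~ax) p x && side (~~ay) q y,
     side ax p x && (y == q) | (x == p) && side ay q y] ->
 distn x u1 + distn y q = distn x p + distn y v2.
Proof. rewrite /side /distn; case: ax; case: ay => /= h1 h2 h; lia. Qed.

Lemma core n m (o : vertex n m) ax ay : interior o -> exists u v : vertex n m,
  [/\ gadj o u, gadj o v, u.2 = o.2, v.1 = o.1 &
   forall w, (w == o) || (w \in quadrant ax ay o) || (w \in quadrant (~~ax) (~~ay) o)
     || (w \in qboundary ax ay o) -> gdist w u = gdist w v].
Proof.
move=> H.
have c1 : (if ax then 0 else 1) < 4 by case: ax.
have c2 : (if ay then 2 else 3) < 4 by case: ay.
have [u [hu cu]] := neighbor' H c1.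
have [v [hv cv]] := neighbor' H c2. clear c1 c2.
have [a0 a1 _ _] := cnat_spec hu; have [_ _ b2 b3] := cnat_spec hv.
have hu2 : u.2 = o.2 by apply: val_inj; move: cu; case: ax => cu; [case: (a0 cu) | case: (a1 cu)].
have hv1 : v.1 = o.1 by apply: val_inj; move: cv; case: ay => cv; [case: (b2 cv) | case: (b3 cv)].
have hu1 : if ax then u.1 + 1 = o.1 else nat_of_ord u.1 = o.1 + 1.
  by move: cu; case: ax => cu; [case: (a0 cu) | case: (a1 cu)].
have hv2 : if ay then v.2 + 1 = o.2 else nat_of_ord v.2 = o.2 + 1.
  by move: cv; case: ay => cv; [case: (b2 cv) | case: (b3 cv)].
exists u, v; split => // w hw.
rewrite /gdist hu2 hv1. apply: (@arith _ _ _ _ _ _ ax ay hu1 hv2).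
have e : (w == o) = (w.1 == o.1) && (w.2 == o.2) by clear; case: w; case: o.
move: hw; rewrite !inE e /= => h.
by rewrite -!orbA in h.
Qed.

Lemma bnd_x n m (o y : vertex n m) b c : gadj o y -> cnat o y = (if b then 1 else 0) ->
  y \in qboundary b c o.
Proof.
move=> hy cy; have [a0 a1 _ _] := cnat_spec hy.
rewrite inE /side; apply/orP; left.
by move: cy; case: b => cy; [case: (a1 cy) | case: (a0 cy)] => h1 h2; apply/andP; split; (apply/eqP; apply: val_inj) || (rewrite /=; lia).
Qed.

Lemma bnd_y n m (o y : vertex n m) b c : gadj o y -> cnat o y = (if c then 3 else 2) ->
  y \in qboundary b c o.
Proof.
move=> hy cy; have [_ _ a2 a3] := cnat_spec hy.
rewrite inE /side; apply/orP; right.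
by move: cy; case: c => cy; [case: (a3 cy) | case: (a2 cy)] => h1 h2; apply/andP; split; (apply/eqP; apply: val_inj) || (rewrite /=; lia).
Qed.

Theorem lemma4 (n m : nat) (o : vertex n m)
  (sx sy tx ty : bool) (A B C : {set vertex n m}) :
  3 <= n -> 3 <= m ->
  interior o ->
  opposite o sx sy tx ty ->
  A \subset quadrant sx sy o ->
  B \subset quadrant tx ty o ->
  (C \subset qboundary sx sy o \/ C \subset qboundary tx ty o) ->
  exists u v : vertex n m,
    [/\ gadj o u, gadj o v, u.2 = o.2, v.1 = o.1 &
        forall w, w \in o |: (A :|: B :|: C) -> ~~ resolves w u v].
Proof.
move=> _ _ H Hop HA HB HC.
have htx : tx = ~~ sx.
  case: (eqVneq tx sx) => [e|]; last by case: (tx) (sx) => [] [].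
  have c1 : (if sx then 1 else 0) < 4 by case: (sx).
  have [y [hy cy]] := neighbor' H c1.
  have := disjointFr Hop (bnd_x sy hy cy).
  by rewrite e (bnd_x ty hy cy).
have hty : ty = ~~ sy.
  case: (eqVneq ty sy) => [e|]; last by case: (ty) (sy) => [] [].
  have c1 : (if sy then 3 else 2) < 4 by case: (sy).
  have [y [hy cy]] := neighbor' H c1.
  have := disjointFr Hop (bnd_y sx hy cy).
  by rewrite e (bnd_y tx hy cy).
subst tx ty.
case: HC => HC.
- have [u [v [h1 h2 h3 h4 h5]]] := core sx sy H.
  exists u, v; split => // w hw; rewrite /resolves negbK; apply/eqP/h5.
  move: hw; rewrite in_setU1 !in_setU => /orP [->//|/orP [/orP [wA|wB]|wC]].
  + by rewrite (subsetP HA _ wA) !orbT.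
  + by rewrite (subsetP HB _ wB) !orbT.
  + by rewrite (subsetP HC _ wC) !orbT.
- have [u [v [h1 h2 h3 h4 h5]]] := core (~~ sx) (~~ sy) H.
  rewrite !negbK in h5.
  exists u, v; split => // w hw; rewrite /resolves negbK; apply/eqP/h5.
  move: hw; rewrite in_setU1 !in_setU => /orP [->//|/orP [/orP [wA|wB]|wC]].
  + by rewrite (subsetP HA _ wA) !orbT.
  + by rewrite (subsetP HB _ wB) orbT.
  + by rewrite (subsetP HC _ wC) !orbT.
Qed.
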